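(* Let $\Sigma$ be a finite set of formulas closed under subformulas. Then for every $\Gamma\in W_c$ and $\varphi\in\Sigma$, $(\mathcal M^{\mathsf{CS4}}_\Sigma,\Gamma)\models\varphi$ iff $\varphi\in\Gamma^+$; consequently, for $\varphi\in\Sigma$, $\mathsf{CS4}\vdash\varphi$ iff $\mathcal M^{\mathsf{CS4}}_\Sigma\models\varphi$.
   Context: Formulas over a countably infinite set $\mathbb P$: $p\mid\bot\mid\varphi\wedge\psi\mid\varphi\vee\psi\mid\varphi\to\psi\mid\Diamond\varphi\mid\Box\varphi$; $\mathcal L$ is the set of all formulas. Satisfaction in a structure $(W,W_\bot,\preccurlyeq,\sqsubseteq,V)$: $p$ iff $w\in V(p)$; $\bot$ iff $w\in W_\bot$; $\wedge,\vee$ pointwise; $w\models\varphi\to\psi$ iff for all $v\succcurlyeq w$, $v\models\varphi$ implies $v\models\psi$; $w\models\Diamond\varphi$ iff for all $u\succcurlyeq w$ there is $v\sqsupseteq u$ with $v\models\varphi$; $w\models\Box\varphi$ iff $v\models\varphi$ whenever $w\preccurlyeq u\sqsubseteq v$; $\mathcal M\models\varphi$ iff $\varphi$ holds at every $w\in W\setminus W_\bot$. $\mathsf{CS4}$ is the least set of formulas containing all intuitionistic propositional tautologies and all instances of $\Box(\varphi\to\psi)\to(\Box\varphi\to\Box\psi)$, $\Box(\varphi\to\psi)\to(\Diamond\varphi\to\Diamond\psi)$, $\Box\varphi\to\varphi$, $\varphi\to\Diamond\varphi$, $\Box\varphi\to\Box\Box\varphi$, $\Diamond\Diamond\varphi\to\Diamond\varphi$,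 closed under modus ponens and necessitation. $\Gamma\vdash\Delta$ means $\mathsf{CS4}\vdash\bigwedge\Gamma'\to\bigvee\Delta'$ for finite $\Gamma'\subseteq\Gamma$, $\Delta'\subseteq\Delta$. A set $X$ is prime if $X\vdash\varphi$ implies $\varphi\in X$ and $\varphi\vee\psi\in X$ implies $\varphi\in X$ or $\psi\in X$. A $\mathsf{CS4}$-theory is a pair $\Phi=(\Phi^+;\Phi^\Diamond)$ with $\Phi^+$ prime and $\Diamond\bigvee\Psi\notin\Phi^+$ for every nonempty finite $\Psi\subseteq\Phi^\Diamond$. $\Phi^\Box=\{\varphi:\Box\varphi\in\Phi^+\}$. $W_c$ = all $\mathsf{CS4}$-theories; $W_{\bot c}=\{(\mathcal L;\varnothing)\}$; $\Phi\preccurlyeq_c\Psi$ iff $\Phi^+\subseteq\Psi^+$; $\Phi\sqsubseteq_c\Psi$ iff $\Phi^\Box\subseteq\Psi^+$ and $\Phi^\Diamond\subseteq\Psi^\Diamond$; $V_c(p)=\{\Phi:p\in\Phi^+\}$. For $\Gamma,\Delta\in W_c$, $\Gamma\preccurlyeq_\Sigma\Delta$ iff $\Gamma\preccurlyeq_c\Delta$ and either $\Gamma^+=\Delta^+$ or there is $\chi\in\Sigma$ with $\chi\in\Delta^+\setminus\Gamma^+$. $\mathcal M^{\mathsf{CS4}}_\Sigma=(W_c,W_{\bot c},\preccurlyeq_\Sigma,\sqsubseteq_c,V_c)$. *)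

(* Defs.v *)
From Stdlib Require Import List.
Import ListNotations.

Inductive form : Type :=
| Var : nat -> form
| Bot : form
| And : form -> form -> form
| Or  : form -> form -> form
| Imp : form -> form -> form
| Dia : form -> form
| Box : form -> form.

Definition Top : form := Imp Bot Bot.

Fixpoint bigAnd (l : list form) : form :=
  match l with
  | [] => Top
  | [a] => a
  | a :: l' => And a (bigAnd l')
  end.

Fixpoint bigOr (l : list form) : form :=
  match l with
  | [] => Bot
  | [a] => a
  | a :: l' => Or a (bigOr l')
  end.

(* Axioms (1)-(9) axiomatize intuitionistic
   propositional logic with bottom primitive; taken as schemata over the whole
   modal language together with modus ponens they yield exactly all instances
   of intuitionistic propositional tautologies. *)
Inductive CS4 : form -> Prop :=
| ax_K    a b   : CS4 (Imp a (Imp b a))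
| ax_S    a b c : CS4 (Imp (Imp a (Imp b c)) (Imp (Imp a b) (Imp a c)))
| ax_andE1 a b  : CS4 (Imp (And a b) a)
| ax_andE2 a b  : CS4 (Imp (And a b) b)
| ax_andI a b   : CS4 (Imp a (Imp b (And a b)))
| ax_orI1 a b   : CS4 (Imp a (Or a b))
| ax_orI2 a b   : CS4 (Imp b (Or a b))
| ax_orE  a b c : CS4 (Imp (Imp a c) (Imp (Imp b c) (Imp (Or a b) c)))
| ax_efq  a     : CS4 (Imp Bot a)
| ax_boxK a b   : CS4 (Imp (Box (Imp a b)) (Imp (Box a) (Box b)))
| ax_diaK a b   : CS4 (Imp (Box (Imp a b)) (Imp (Dia a) (Dia b)))
| ax_T    a     : CS4 (Imp (Box a) a)
| ax_diaT a     : CS4 (Imp a (Dia a))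
| ax_4    a     : CS4 (Imp (Box a) (Box (Box a)))
| ax_dia4 a     : CS4 (Imp (Dia (Dia a)) (Dia a))
| rule_MP a b   : CS4 (Imp a b) -> CS4 a -> CS4 b
| rule_Nec a    : CS4 a -> CS4 (Box a).

Definition derives (Gamma Delta : form -> Prop) : Prop :=
  exists (lG lD : list form),
    (forall x, In x lG -> Gamma x) /\ (forall x, In x lD -> Delta x) /\
    CS4 (Imp (bigAnd lG) (bigOr lD)).

Definition prime (X : form -> Prop) : Prop :=
  (forall phi, derives X (fun psi => psi = phi) -> X phi) /\
  (forall phi psi, X (Or phi psi) -> X phi \/ X psi).

Record theory : Type := {
  tplus : form -> Prop;
  tdia  : form -> Prop;
  tplus_prime : prime tplus;
  tdia_cons : forall Psi : list form, Psi <> [] ->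
      (forall x, In x Psi -> tdia x) -> ~ tplus (Dia (bigOr Psi))
}.

Definition tbox (G : theory) (phi : form) : Prop := tplus G (Box phi).

Record structure : Type := {
  world : Type;
  wbot  : world -> Prop;
  wle   : world -> world -> Prop;   (* intuitionistic order *)
  wsq   : world -> world -> Prop;   (* modal relation *)
  val   : nat -> world -> Prop
}.

Fixpoint sat (M : structure) (w : world M) (phi : form) : Prop :=
  match phi with
  | Var p => val M p w
  | Bot => wbot M w
  | And a b => sat M w a /\ sat M w b
  | Or a b => sat M w a \/ sat M w b
  | Imp a b => forall v, wle M w v -> sat M v a -> sat M v b
  | Dia a => forall u, wle M w u -> exists v, wsq M u v /\ sat M v a
  | Box a => forall u v, wle M w u -> wsq M u v -> sat M v a
  end.

Definition valid (M : structure) (phi : form) : Prop :=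
  forall w : world M, ~ wbot M w -> sat M w phi.

Definition bot_c (G : theory) : Prop :=
  (forall phi, tplus G phi) /\ (forall phi, ~ tdia G phi).

Definition le_c (G D : theory) : Prop := forall phi, tplus G phi -> tplus D phi.

Definition sq_c (G D : theory) : Prop :=
  (forall phi, tbox G phi -> tplus D phi) /\ (forall phi, tdia G phi -> tdia D phi).

Definition le_Sigma (Sigma : form -> Prop) (G D : theory) : Prop :=
  le_c G D /\
  ((forall phi, tplus G phi <-> tplus D phi) \/
   (exists chi, Sigma chi /\ tplus D chi /\ ~ tplus G chi)).

Definition canonical_model (Sigma : form -> Prop) : structure := {|
  world := theory;
  wbot := bot_c;
  wle := le_Sigma Sigma;
  wsq := sq_c;
  val := fun p G => tplus G (Var p)
|}.

Fixpoint subformulas (phi : form) : list form :=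
  phi :: match phi with
         | Var _ | Bot => []
         | And a b | Or a b | Imp a b => subformulas a ++ subformulas b
         | Dia a | Box a => subformulas a
         end.

Definition finite_set (S : form -> Prop) : Prop :=
  exists l : list form, forall phi, S phi <-> In phi l.

Definition subformula_closed (S : form -> Prop) : Prop :=
  forall phi psi, S phi -> In psi (subformulas phi) -> S psi.

(* Main.v *)
Require Import Defs.
From Stdlib Require Import List Classical Cantor Lia.
Import ListNotations.

Lemma thm_id a : CS4 (Imp a a).
Proof.
  eapply rule_MP. eapply rule_MP. apply (ax_S a (Imp a a) a).
  apply ax_K. apply (ax_K a a).
Qed.

Inductive der (H : list form) : form -> Prop :=
| dhyp a : In a H -> der H a
| dthm a : CS4 a -> der H a
| dmp a b : der H (Imp a b) -> der H a -> der H b.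

Lemma der_weak H H' a : der H a -> incl H H' -> der H' a.
Proof. induction 1; intros; [apply dhyp; auto| apply dthm; auto| eapply dmp; eauto]. Qed.

Lemma deduction a H b : der (a :: H) b -> der H (Imp a b).
Proof.
  induction 1.
  - destruct H0 as [<-|Hi]. apply dthm, thm_id.
    eapply dmp. apply dthm, ax_K. now apply dhyp.
  - eapply dmp. apply dthm, ax_K. now apply dthm.
  - eapply dmp. eapply dmp. apply dthm, ax_S. eauto. eauto.
Qed.

Lemma der_nil a : der [] a -> CS4 a.
Proof. induction 1; [destruct H|auto|eapply rule_MP; eauto]. Qed.

Lemma der_cut H H' b : der H b -> (forall a, In a H -> der H' a) -> der H' b.
Proof. induction 1; intros; [auto|apply dthm; auto|eapply dmp; eauto]. Qed.

Lemma der_mp1 H a b : CS4 (Imp a b) -> der H a -> der H b.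
Proof. intros; eapply dmp; [apply dthm; eauto| auto]. Qed.

Lemma der_and H a b : der H a -> der H b -> der H (And a b).
Proof. intros; eapply dmp; [eapply dmp; [apply dthm, ax_andI|]|]; eauto. Qed.

Lemma der_orE H a b c : der H (Or a b) -> der (a :: H) c -> der (b :: H) c -> der H c.
Proof.
  intros H1 H2 H3. eapply dmp; [|exact H1].
  eapply dmp; [eapply dmp; [apply dthm, ax_orE|]|]; apply deduction; auto.
Qed.

Lemma bigAnd_in H x : In x H -> der [bigAnd H] x.
Proof.
  induction H as [|y H IH]; simpl; [tauto|].
  destruct H as [|z H'].
  - intros [<-|[]]. apply dhyp; simpl; auto.
  - intros [<-|Hi].
    + eapply der_mp1. apply ax_andE1. apply dhyp; simpl; auto.
    + eapply der_cut. apply IH, Hi. intros a [<-|[]].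
      eapply der_mp1. apply ax_andE2. apply dhyp; simpl; auto.
Qed.

Lemma bigAnd_der H : der H (bigAnd H).
Proof.
  induction H as [|y H IH]; simpl.
  - apply dthm, thm_id.
  - destruct H as [|z H'].
    + apply dhyp; simpl; auto.
    + apply der_and. apply dhyp; simpl; auto.
      eapply der_weak; [exact IH|]. intros x; simpl; tauto.
Qed.

Lemma der_to_CS4 H a : der H a -> CS4 (Imp (bigAnd H) a).
Proof.
  intros D. apply der_nil, deduction. eapply der_cut; [exact D|].
  intros x Hx. apply bigAnd_in, Hx.
Qed.

Lemma CS4_to_der H a : CS4 (Imp (bigAnd H) a) -> der H a.
Proof. intros C. eapply der_mp1; [exact C| apply bigAnd_der]. Qed.

Lemma bigOr_in l x : In x l -> der [x] (bigOr l).
Proof.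
  induction l as [|y l IH]; simpl; [tauto|].
  destruct l as [|z l'].
  - intros [<-|[]]. apply dhyp; simpl; auto.
  - intros [<-|Hi].
    + eapply der_mp1. apply ax_orI1. apply dhyp; simpl; auto.
    + eapply der_mp1. apply ax_orI2. apply IH, Hi.
Qed.

Lemma bigOr_elim H l c : der H (bigOr l) -> (forall x, In x l -> der (x :: H) c) -> der H c.
Proof.
  revert H; induction l as [|y l IH]; simpl; intros H D E.
  - eapply der_mp1; [apply ax_efq|exact D].
  - destruct l as [|z l'].
    + eapply der_cut. apply E; auto. intros a [<-|Ha]; [exact D|apply dhyp; auto].
    + eapply der_orE; [exact D| apply E; auto|].
      apply IH. apply dhyp; simpl; auto.
      intros x Hx. eapply der_weak. apply (E x); simpl; auto. intros w; simpl; tauto.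
Qed.

Lemma bigOr_mono l l' : incl l l' -> CS4 (Imp (bigOr l) (bigOr l')).
Proof.
  intros I. apply der_nil, deduction. eapply bigOr_elim. apply dhyp; simpl; auto.
  intros x Hx. eapply der_weak. apply bigOr_in, I, Hx. intros w; simpl; tauto.
Qed.

Lemma box_mono a b : CS4 (Imp a b) -> CS4 (Imp (Box a) (Box b)).
Proof. intros; eapply rule_MP; [apply ax_boxK|apply rule_Nec; auto]. Qed.
Lemma dia_mono a b : CS4 (Imp a b) -> CS4 (Imp (Dia a) (Dia b)).
Proof. intros; eapply rule_MP; [apply ax_diaK|apply rule_Nec; auto]. Qed.

Lemma der_box l a : der l a -> der (map Box l) (Box a).
Proof.
  revert a; induction l as [|x l IH]; simpl; intros a D.
  - apply dthm, rule_Nec, der_nil, D.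
  - apply deduction in D. apply IH in D.
    eapply dmp. eapply dmp. apply dthm, ax_boxK.
    eapply der_weak; [exact D|]. intros w; simpl; tauto.
    apply dhyp; simpl; auto.
Qed.

Fixpoint enc (f : form) : nat :=
  match f with
  | Var p => to_nat (0, p)
  | Bot => to_nat (1, 0)
  | And a b => to_nat (2, to_nat (enc a, enc b))
  | Or a b => to_nat (3, to_nat (enc a, enc b))
  | Imp a b => to_nat (4, to_nat (enc a, enc b))
  | Dia a => to_nat (5, enc a)
  | Box a => to_nat (6, enc a)
  end.

Lemma to_nat_inj p q : to_nat p = to_nat q -> p = q.
Proof. intros E. rewrite <- (cancel_of_to p), <- (cancel_of_to q), E. auto. Qed.

Lemma pair_snd (a b x y : nat) : (a, x) = (b, y) -> a = b /\ x = y.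
Proof. intros E; split; [exact (f_equal fst E)|exact (f_equal snd E)]. Qed.

Lemma enc_inj f g : enc f = enc g -> f = g.
Proof.
  revert g; induction f; destruct g; cbn -[to_nat]; intros E;
  repeat match goal with H: to_nat _ = to_nat _ |- _ =>
     apply to_nat_inj, pair_snd in H; destruct H as [? H] end;
  try discriminate; subst; f_equal; auto.
Qed.

Definition dd (X D : form -> Prop) : Prop :=
  exists lG lD, (forall x, In x lG -> X x) /\ (forall x, In x lD -> D x) /\
    der lG (bigOr lD).

Lemma dd_mono (X X' D : form -> Prop) : (forall x, X x -> X' x) -> dd X D -> dd X' D.
Proof. intros S (lG & lD & H1 & H2 & H3). exists lG, lD; auto. Qed.

Lemma dd_ext (Y D : form -> Prop) phi : dd (fun x => Y x \/ x = phi) D ->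
  exists lG lD, (forall x, In x lG -> Y x) /\ (forall x, In x lD -> D x) /\
    der (phi :: lG) (bigOr lD).
Proof.
  intros (lG & lD & H1 & H2 & H3).
  assert (exists lG', (forall x, In x lG' -> Y x) /\ incl lG (phi :: lG')) as (lG' & A & B).
  { clear H3. induction lG as [|y l IH].
    - exists []. split; [simpl; tauto| intros w []].
    - destruct IH as (l' & A & B). { intros x Hx; apply H1; simpl; auto. }
      destruct (H1 y (or_introl eq_refl)) as [Hy| ->].
      + exists (y :: l'). split. intros x [<-|Hx]; auto.
        intros w [<-|Hw]; simpl; auto. apply B in Hw. simpl in Hw; tauto.
      + exists l'. split; auto. intros w [<-|Hw]; simpl; auto. apply B in Hw. simpl in Hw; tauto. }
  exists lG', lD. repeat split; auto. eapply der_weak; eauto.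
Qed.

Section Lind.
Variables X D : form -> Prop.

Fixpoint stage (n : nat) : form -> Prop :=
  match n with
  | 0 => X
  | S n => fun f => stage n f \/ (enc f = n /\ ~ dd (fun g => stage n g \/ g = f) D)
  end.

Lemma stage_mono n m : n <= m -> forall f, stage n f -> stage m f.
Proof. induction 1; simpl; auto. Qed.

Lemma stage_list l : (forall x, In x l -> exists n, stage n x) ->
  exists N, forall x, In x l -> stage N x.
Proof.
  induction l as [|y l IH]; intros H.
  - exists 0; intros x [].
  - destruct IH as [N HN]. { intros x Hx; apply H; simpl; auto. }
    destruct (H y (or_introl eq_refl)) as [M HM].
    exists (N + M). intros x [<-|Hx].
    + eapply stage_mono; [|exact HM]; lia.
    + eapply stage_mono; [|apply HN, Hx]; lia.
Qed.

Hypothesis H0 : ~ dd X D.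

Lemma stage_ok n : ~ dd (stage n) D.
Proof.
  induction n as [|n IH]; simpl; auto.
  intros Hd.
  destruct (classic (exists f, enc f = n /\ ~ dd (fun g => stage n g \/ g = f) D)) as [(f & Ef & Hf)|Hno].
  - apply Hf. eapply dd_mono; [|exact Hd]. simpl. intros g [Hg|[Eg _]]; auto.
    right. apply enc_inj. congruence.
  - apply IH. eapply dd_mono; [|exact Hd]. simpl. intros g [Hg|[Eg Hg]]; auto.
    exfalso; apply Hno; eauto.
Qed.

Definition lind : form -> Prop := fun f => exists n, stage n f.

Lemma lind_sub f : X f -> lind f.
Proof. intros; exists 0; auto. Qed.

Lemma lind_ok : ~ dd lind D.
Proof.
  intros (lG & lD & H1 & H2 & H3).
  destruct (stage_list lG H1) as [N HN].
  apply (stage_ok N). exists lG, lD; auto.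
Qed.

Lemma lind_key phi : lind phi \/ dd (fun g => lind g \/ g = phi) D.
Proof.
  destruct (classic (dd (fun g => stage (enc phi) g \/ g = phi) D)) as [Hd|Hd].
  - right. eapply dd_mono; [|exact Hd]. intros g [Hg|Hg]; [left; exists (enc phi)|right]; auto.
  - left. exists (S (enc phi)). simpl. right. auto.
Qed.

Lemma lind_closed l phi : (forall x, In x l -> lind x) -> der l phi -> lind phi.
Proof.
  intros Hl Dl. destruct (lind_key phi) as [|Hd]; auto.
  apply dd_ext in Hd as (lG & lD & A & B & C).
  exfalso; apply lind_ok. exists (l ++ lG), lD. repeat split; auto.
  - intros x Hx. apply in_app_or in Hx as [Hx|Hx]; auto.
  - eapply der_cut; [exact C|]. intros a [<-|Ha].
    + eapply der_weak; [exact Dl|]. intros w Hw; apply in_or_app; auto.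
    + apply dhyp, in_or_app; auto.
Qed.

Lemma lind_or a b : lind (Or a b) -> lind a \/ lind b.
Proof.
  intros Hab. destruct (lind_key a) as [|Ha]; auto.
  destruct (lind_key b) as [|Hb]; auto.
  apply dd_ext in Ha as (l1 & d1 & A1 & B1 & C1).
  apply dd_ext in Hb as (l2 & d2 & A2 & B2 & C2).
  exfalso; apply lind_ok. exists (Or a b :: l1 ++ l2), (d1 ++ d2). repeat split.
  - intros x [<-|Hx]; auto. apply in_app_or in Hx as [Hx|Hx]; auto.
  - intros x Hx. apply in_app_or in Hx as [Hx|Hx]; auto.
  - eapply der_orE. apply dhyp; simpl; auto.
    + eapply der_mp1. apply (bigOr_mono d1). intros w Hw; apply in_or_app; auto.
      eapply der_weak; [exact C1|]. intros w [<-|Hw]; simpl; auto.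
      right; right; apply in_or_app; auto.
    + eapply der_mp1. apply (bigOr_mono d2). intros w Hw; apply in_or_app; auto.
      eapply der_weak; [exact C2|]. intros w [<-|Hw]; simpl; auto.
      right; right; apply in_or_app; auto.
Qed.

Lemma lind_prime : prime lind.
Proof.
  split; [|apply lind_or].
  intros phi (lG & lD & A & B & C).
  apply (lind_closed lG); auto.
  apply CS4_to_der in C. eapply bigOr_elim; [exact C|].
  intros x Hx. rewrite (B x Hx). apply dhyp; simpl; auto.
Qed.

End Lind.

Lemma lindenbaum (X D : form -> Prop) : ~ dd X D ->
  exists Y, (forall x, X x -> Y x) /\ prime Y /\ ~ dd Y D.
Proof.
  intros H. exists (lind X D). split; [apply lind_sub|split; [apply lind_prime|apply lind_ok]]; auto.
Qed.

Lemma tclos (G : theory) l a : (forall x, In x l -> tplus G x) -> der l a -> tplus G a.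
Proof.
  intros Hl D. apply (proj1 (tplus_prime G)). exists l, [a]. repeat split; auto.
  - intros x [<-|[]]; auto.
  - apply der_to_CS4, D.
Qed.

Lemma nodia (P : Prop) (Psi : list form) : Psi <> [] -> (forall x, In x Psi -> False) -> ~ P.
Proof. intros H1 H2. destruct Psi as [|f]; [congruence|]. exfalso; apply (H2 f); left; auto. Qed.

Definition mkT0 (Y : form -> Prop) (HY : prime Y) : theory :=
  Build_theory Y (fun _ => False) HY (fun Psi h1 h2 => nodia _ Psi h1 h2).

Lemma trivprime : prime (fun _ => True).
Proof. split; auto. Qed.

Definition botT : theory := mkT0 (fun _ => True) trivprime.

Lemma in_sub_self a : In a (subformulas a).
Proof. destruct a; left; reflexivity. Qed.

Lemma tclos1 (G : theory) a b : CS4 (Imp a b) -> tplus G a -> tplus G b.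
Proof. intros C H. apply (tclos G [a]). intros x [<-|[]]; auto. eapply der_mp1; [exact C|apply dhyp; left; auto]. Qed.

Lemma tclos2 (G : theory) a b c : der [a; b] c -> tplus G a -> tplus G b -> tplus G c.
Proof. intros D H1 H2. apply (tclos G [a; b]); auto. intros x [<-|[<-|[]]]; auto. Qed.

Section Truth.
Variable Sigma : form -> Prop.
Hypothesis Hc : subformula_closed Sigma.
Let M := canonical_model Sigma.

Lemma sub1 a b (f : form -> form -> form) :
  (forall x y, subformulas (f x y) = f x y :: subformulas x ++ subformulas y) ->
  Sigma (f a b) -> Sigma a /\ Sigma b.
Proof.
  intros E H. split; apply (Hc _ _ H); rewrite E; right; apply in_or_app;
  [left|right]; apply in_sub_self.
Qed.

Lemma truth phi : Sigma phi -> forall G : theory, sat M G phi <-> tplus G phi.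
Proof.
  induction phi as [p| |a IHa b IHb|a IHa b IHb|a IHa b IHb|a IHa|a IHa]; intros HS G; simpl.
  - tauto.
  - split.
    + intros [H _]; apply H.
    + intros H. split.
      * intros phi. apply (tclos1 G Bot); auto. apply ax_efq.
      * intros phi Hd. apply (tdia_cons G [phi]); [congruence|intros x [<-|[]]; auto|].
        simpl. apply (tclos1 G Bot); auto. apply ax_efq.
  - destruct (sub1 a b And) as [Sa Sb]; auto.
    rewrite (IHa Sa G), (IHb Sb G). split.
    + intros [H1 H2]. eapply tclos2; [|exact H1|exact H2]. apply der_and; apply dhyp; simpl; auto.
    + intros H; split; eapply tclos1; eauto; [apply ax_andE1|apply ax_andE2].
  - destruct (sub1 a b Or) as [Sa Sb]; auto.
    rewrite (IHa Sa G), (IHb Sb G). split.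
    + intros [H|H]; eapply tclos1; eauto; [apply ax_orI1|apply ax_orI2].
    + apply (proj2 (tplus_prime G)).
  - destruct (sub1 a b Imp) as [Sa Sb]; auto.
    split.
    + intros H. apply NNPP. intros Hn.
      destruct (classic (tplus G a)) as [Ha|Ha].
      * apply Hn. apply (tclos1 G b); [apply ax_K|].
        apply (IHb Sb G), H; [split; [intros x; auto|left; tauto]|apply (IHa Sa G); auto].
      * assert (Hd : ~ dd (fun x => tplus G x \/ x = a) (fun x => x = b)).
        { intros Hd. apply dd_ext in Hd as (lG & lD & A & B & C).
          apply Hn. apply (tclos G lG); auto. apply deduction.
          eapply bigOr_elim; [exact C|]. intros x Hx. rewrite (B x Hx). apply dhyp; left; auto. }
        destruct (lindenbaum _ _ Hd) as (Y & HXY & HY & Hok).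
        apply Hok. exists [b], [b]. repeat split.
        -- intros x [<-|[]]. apply (IHb Sb (mkT0 Y HY)).
           apply H.
           ++ split. intros x Hx; apply HXY; auto.
              right. exists a. split; [auto|split; [simpl; apply HXY; auto|auto]].
           ++ apply (IHa Sa (mkT0 Y HY)). simpl. apply HXY; auto.
        -- intros x [<-|[]]; auto.
        -- apply dhyp; left; auto.
    + intros H v [Hle _] Ha. apply (IHb Sb v). apply (IHa Sa v) in Ha.
      eapply tclos2; [|apply Hle, H|exact Ha]. eapply dmp; apply dhyp; simpl; auto.
  - assert (Sa : Sigma a) by (apply (Hc _ _ HS); right; apply in_sub_self).
    split.
    + intros H. apply NNPP. intros Hn.
      assert (Hcons : forall Psi, Psi <> [] -> (forall x, In x Psi -> x = a) ->
                 ~ tplus G (Dia (bigOr Psi))).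
      { intros Psi _ Hin HP. apply Hn. eapply tclos1; [|exact HP].
        apply dia_mono, der_nil, deduction. eapply bigOr_elim; [apply dhyp; left; auto|].
        intros x Hx; rewrite (Hin x Hx); apply dhyp; left; auto. }
      set (U := Build_theory (tplus G) (fun x => x = a) (tplus_prime G) Hcons).
      destruct (H U) as (v & [_ Hv] & Hs).
      { split; [intros x; auto|left; tauto]. }
      apply (IHa Sa v) in Hs.
      apply (tdia_cons v [a]); [congruence|intros x [<-|[]]; apply Hv; reflexivity|].
      simpl. eapply tclos1; [apply ax_diaT|exact Hs].
    + intros HG u [Hle _]. assert (Hu : tplus u (Dia a)) by auto.
      destruct (classic (exists x0, tdia u x0)) as [[x0 Hx0]|Hno].
      * set (Dset := fun x => exists Psi, Psi <> [] /\ (forall y, In y Psi -> tdia u y) /\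
                       x = Dia (bigOr Psi)).
        assert (Hd : ~ dd (fun x => tbox u x \/ x = a) Dset).
        { intros Hd. apply dd_ext in Hd as (lG & lD & A & B & C).
          assert (Hg : exists Psi, (forall y, In y Psi -> tdia u y) /\
                    forall x, In x lD -> exists P, incl P Psi /\ x = Dia (bigOr P)).
          { clear C. induction lD as [|d lD IH].
            - exists []. split; intros x [].
            - destruct IH as (Psi & P1 & P2). { intros; apply B; right; auto. }
              destruct (B d (or_introl eq_refl)) as (P & _ & HP & ->).
              exists (P ++ Psi). split.
              + intros y Hy; apply in_app_or in Hy as [Hy|Hy]; auto.
              + intros x [<-|Hx].
                * exists P. split; auto. intros w Hw; apply in_or_app; auto.
                * destruct (P2 x Hx) as (Q & HQ & ->). exists Q. split; auto.
                  intros w Hw; apply in_or_app; auto. }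
          destruct Hg as (Psi & P1 & P2).
          assert (C2 : der (a :: lG) (Dia (bigOr (x0 :: Psi)))).
          { eapply bigOr_elim; [exact C|]. intros x Hx.
            destruct (P2 x Hx) as (Q & HQ & ->).
            eapply der_mp1; [apply dia_mono, bigOr_mono|apply dhyp; left; auto].
            intros w Hw; right; auto. }
          apply deduction, der_box in C2.
          assert (Hb : tplus u (Box (Imp a (Dia (bigOr (x0 :: Psi)))))).
          { apply (tclos u _ _) in C2; auto. intros x Hx. apply in_map_iff in Hx as (y & <- & Hy).
            apply A, Hy. }
          apply (tdia_cons u (x0 :: Psi)); [congruence| intros y [<-|Hy]; auto|].
          eapply tclos1; [apply ax_dia4|].
          eapply tclos2; [|exact Hb|exact Hu].
          eapply dmp; [eapply dmp; [apply dthm, ax_diaK|]|]; apply dhyp; simpl; auto. }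
        destruct (lindenbaum _ _ Hd) as (Y & HXY & HY & Hok).
        assert (Hcons : forall Psi, Psi <> [] -> (forall x, In x Psi -> tdia u x) ->
                 ~ Y (Dia (bigOr Psi))).
        { intros Psi Hne Hin HP. apply Hok. exists [Dia (bigOr Psi)], [Dia (bigOr Psi)].
          repeat split.
          - intros x [<-|[]]; auto.
          - intros x [<-|[]]. exists Psi; auto.
          - apply dhyp; left; auto. }
        exists (Build_theory Y (tdia u) HY Hcons). split.
        -- split; simpl; auto.
        -- apply IHa; auto. simpl. apply HXY; auto.
      * exists botT. split.
        -- split; simpl; auto. intros x Hx; apply Hno; eauto.
        -- apply IHa; auto. simpl; auto.
  - assert (Sa : Sigma a) by (apply (Hc _ _ HS); right; apply in_sub_self).
    split.
    + intros H. apply NNPP. intros Hn.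
      assert (Hd : ~ dd (tbox G) (fun x => x = a)).
      { intros (lG & lD & A & B & C). apply Hn.
        assert (C2 : der lG a).
        { eapply bigOr_elim; [exact C|]. intros x Hx; rewrite (B x Hx); apply dhyp; left; auto. }
        apply der_box in C2. apply (tclos G _ _) in C2; auto.
        intros x Hx. apply in_map_iff in Hx as (y & <- & Hy). apply A, Hy. }
      destruct (lindenbaum _ _ Hd) as (Y & HXY & HY & Hok).
      apply Hok. exists [a], [a]. repeat split.
      * intros x [<-|[]]. apply (IHa Sa (mkT0 Y HY)).
        apply (H (mkT0 (tplus G) (tplus_prime G))).
        -- split; [intros x; auto|left; tauto].
        -- split; simpl; auto.
      * intros x [<-|[]]; auto.
      * apply dhyp; left; auto.
    + intros H u v [Hle _] [Hb _]. apply IHa; auto.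
apply Hb, Hle, H.
Qed.

End Truth.

Theorem mainTheorem19 (Sigma : form -> Prop) :
  finite_set Sigma -> subformula_closed Sigma ->
  (forall (G : theory) (phi : form), Sigma phi ->
      (sat (canonical_model Sigma) G phi <-> tplus G phi)) /\
  (forall phi : form, Sigma phi ->
      (CS4 phi <-> valid (canonical_model Sigma) phi)).
Proof.
  intros _ Hc. split.
  - intros G phi HS. apply truth; auto.
  - intros phi HS. split.
    + intros C G _. apply truth; auto. apply (tclos G []); [intros x []|apply dthm; auto].
    + intros V. apply NNPP; intros Hn.
      assert (Hd : ~ dd (fun _ => False) (fun x => x = phi)).
      { intros (lG & lD & A & B & C). apply Hn.
        destruct lG as [|g]; [|exfalso; apply (A g); left; auto].
        apply der_nil. eapply bigOr_elim; [exact C|].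
        intros x Hx; rewrite (B x Hx); apply dhyp; left; auto. }
      destruct (lindenbaum _ _ Hd) as (Y & _ & HY & Hok).
      assert (Hp : Y phi -> False).
      { intros Hy. apply Hok. exists [phi], [phi]. repeat split.
        - intros x [<-|[]]; auto.
        - intros x [<-|[]]; auto.
        - apply dhyp; left; auto. }
      apply Hp. apply (truth Sigma Hc phi HS (mkT0 Y HY)). apply V.
      intros [Hall _]. apply Hp, Hall.
Qed.
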